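(* Let $\Omega=\{\omega_1,\dots,\omega_K\}$ with $0<\omega_1<\dots<\omega_K$ and let $\mu^*$ be an aggregate market such that $\mu^*\in\mathcal{M}_r\cap\mathcal{M}_s$ for some $r<s$ (the monopolist is indifferent between charging $\omega_r$ and $\omega_s$ in $\mu^*$). Then for every cost level $k\ge0$, not segmenting (the segmentation placing all mass on $\mu^*$) is not optimal: there exists a segmentation of $\mu^*$ giving the monopolist a strictly higher net payoff, so the monopolist always chooses to segment the market.
   Context: A monopolist with zero marginal cost sells one good to a unit mass of consumers with valuations in $\Omega$. A market is a probability vector $\mu=(\mu_1,\dots,\mu_K)$, $\mu_i$ the share of consumers with valuation $\omega_i$. Let $s(p,\omega)=p$ if $\omega\ge p$ and $0$ otherwise; in each market $\mu$ the monopolist charges $p^*(\mu)\in\arg\max_p\sum_i s(p,\omega_i)\mu_i$, and $\mathcal{M}_j$ denotes the set of markets in which $\omega_j$ is an optimal price. A segmentation of $\mu^*$ is a finitely supported probability distribution $\tau$ over markets with $\sum_{\mu^s\in\mathrm{supp}\,\tau}\tau(\mu^s)\mu^s=\mu^*$. With Shannon entropy $H(\mu)=-\sum_i\mu_i\ln\mu_i$ ($0\ln0=0$), the cost of $\tau$ is $c(\tau;\mu^*,k)=k\,[H(\mu^* )-\mathbb{E}_\tau H(\mu^s)]$, and the monopolist's net payoff from $\tau$ is $\mathbb{E}_\tau\big[\sum_i s(p^*(\mu^s),\omega_i)\mu^s_i\big]-c(\tau;\mu^*,k)$. *)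

(* Defs.v *)
From mathcomp Require Import all_boot all_order all_algebra.
From mathcomp Require Import all_classical all_reals.
From mathcomp Require Import exp.
Set Implicit Arguments. Unset Strict Implicit. Unset Printing Implicit Defensive.
Import Order.TTheory GRing.Theory Num.Theory.
Local Open Scope ring_scope.

Section Defs.
Variables (R : realType) (K : nat).

Definition is_market (mu : 'I_K -> R) : Prop :=
  (forall i, 0 <= mu i) /\ \sum_(i < K) mu i = 1.

Definition sfun (p x : R) : R := if p <= x then p else 0.

Definition revenue (w : 'I_K -> R) (p : R) (mu : 'I_K -> R) : R :=
  \sum_(i < K) sfun p (w i) * mu i.

Definition optimal_price (w : 'I_K -> R) (mu : 'I_K -> R) (p : R) : Prop :=
  forall q : R, revenue w q mu <= revenue w p mu.

Definition in_M (w : 'I_K -> R) (j : 'I_K) (mu : 'I_K -> R) : Prop :=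
  is_market mu /\ optimal_price w mu (w j).

Definition xlnx (x : R) : R := if x == 0 then 0 else x * ln x.

Definition entropy (mu : 'I_K -> R) : R := - \sum_(i < K) xlnx (mu i).

(* A finitely supported segmentation of mustar, given by its n support
   points tm j with (positive) probabilities tw j. *)
Definition is_segmentation (mustar : 'I_K -> R) (n : nat)
  (tw : 'I_n -> R) (tm : 'I_n -> 'I_K -> R) : Prop :=
  [/\ forall j, 0 < tw j,
      \sum_(j < n) tw j = 1,
      forall j, is_market (tm j) &
      forall i, \sum_(j < n) tw j * tm j i = mustar i].

Definition seg_cost (k : R) (mustar : 'I_K -> R) (n : nat)
  (tw : 'I_n -> R) (tm : 'I_n -> 'I_K -> R) : R :=
  k * (entropy mustar - \sum_(j < n) tw j * entropy (tm j)).

Definition net_payoff (w : 'I_K -> R) (pstar : ('I_K -> R) -> R) (k : R)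
  (mustar : 'I_K -> R) (n : nat) (tw : 'I_n -> R) (tm : 'I_n -> 'I_K -> R) : R :=
  \sum_(j < n) tw j * revenue w (pstar (tm j)) (tm j)
  - seg_cost k mustar tw tm.

End Defs.

(* Main.v *)
Require Import Defs.
From mathcomp Require Import all_boot all_order all_algebra.
From mathcomp Require Import all_classical all_reals.
From mathcomp Require Import exp.
From mathcomp Require Import ring lra.
Import Order.TTheory GRing.Theory Num.Theory.
Local Open Scope ring_scope.

Lemma lnsub (R : realType) (x y : R) : 0 < x -> 0 < y -> ln y - ln x <= (y - x) / x.
Proof.
move=> x0 y0.
rewrite -ln_div ?posrE //.
have -> : y / x = 1 + (y - x) / x by field; rewrite gt_eqF.
apply: le_ln1Dx.
have : 0 < y / x by exact: divr_gt0.
have -> : y / x = 1 + (y - x) / x by field; rewrite gt_eqF.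
lra.
Qed.

Lemma xlnx_pos (R : realType) (x : R) : 0 < x -> xlnx x = x * ln x.
Proof. by move=> x0; rewrite /xlnx gt_eqF. Qed.

Lemma key (R : realType) (x h : R) : 0 < h -> h < x ->
  xlnx (x + h) + xlnx (x - h) - 2 * xlnx x <= 2 * (h * h) / x.
Proof.
move=> h0 hx.
have x0 : 0 < x by lra.
rewrite !xlnx_pos; try lra.
have e1 := @lnsub R x (x + h) x0 ltac:(lra).
have e2 := @lnsub R x (x - h) x0 ltac:(lra).
have A : (x + h) * (ln (x + h) - ln x) <= (x + h) * ((x + h - x) / x).
  by rewrite ler_wpM2l ?e1; lra.
have B : (x - h) * (ln (x - h) - ln x) <= (x - h) * ((x - h - x) / x).
  by rewrite ler_wpM2l ?e2; lra.
have C : (x + h) * ((x + h - x) / x) + (x - h) * ((x - h - x) / x) = 2 * (h * h) / x.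
  by field; rewrite gt_eqF.
lra.
Qed.

Section S.
Variables (R : realType) (K : nat) (a b : 'I_K).
Hypothesis ab : a != b.

Lemma sum_two (F : 'I_K -> R) : (forall i, i != a -> i != b -> F i = 0) ->
  \sum_i F i = F a + F b.
Proof.
move=> H; rewrite (bigD1 a) //= (bigD1 b) /=; last by rewrite eq_sym.
rewrite big1 ?addr0 // => i /andP[ia ib]; exact: H.
Qed.

Definition dv (i : 'I_K) : R := (i == a)%:R - (i == b)%:R.

Lemma dva : dv a = 1. Proof. by rewrite /dv eqxx (negbTE ab) subr0. Qed.
Lemma dvb : dv b = -1. Proof. by rewrite /dv eqxx eq_sym (negbTE ab) sub0r. Qed.
Lemma dvo i : i != a -> i != b -> dv i = 0.
Proof. by rewrite /dv => /negbTE -> /negbTE ->; rewrite subr0. Qed.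

Lemma sum_d (F : 'I_K -> R) : \sum_i F i * dv i = F a - F b.
Proof.
rewrite (sum_two (fun i => F i * dv i)) ?dva ?dvb; first by ring.
by move=> i ia ib; rewrite dvo ?mulr0.
Qed.

Variable mustar : 'I_K -> R.
Definition mu (e : R) i := mustar i + e * dv i.

Lemma rev_mu w p e : revenue w p (mu e) = revenue w p mustar + e * (sfun p (w a) - sfun p (w b)).
Proof.
rewrite /revenue -(sum_d (fun i => sfun p (w i))) mulr_sumr -big_split /=.
by apply: eq_bigr => i _; rewrite /mu; ring.
Qed.

Lemma market_mu e : is_market mustar -> 0 <= mustar a + e -> 0 <= mustar b - e ->
  is_market (mu e).
Proof.
move=> [h0 h1] ha hb; split.
  move=> i; rewrite /mu; have [->|ia] := eqVneq i a; first by rewrite dva mulr1.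
  have [->|ib] := eqVneq i b; first by rewrite dvb mulrN1.
  by rewrite dvo // mulr0 addr0.
rewrite /mu big_split /= h1 (sum_d (fun _ => e)); lra.
Qed.

Lemma ent_mu e : entropy mustar - (1/2 * entropy (mu e) + 1/2 * entropy (mu (-e))) =
  1/2 * ((xlnx (mustar a + e) + xlnx (mustar a - e) - 2 * xlnx (mustar a))
       + (xlnx (mustar b - e) + xlnx (mustar b + e) - 2 * xlnx (mustar b))).
Proof.
have E : \sum_i (xlnx (mu e i) + xlnx (mu (-e) i) - 2 * xlnx (mustar i)) =
   \sum_i xlnx (mu e i) + \sum_i xlnx (mu (-e) i) - 2 * \sum_i xlnx (mustar i).
  by rewrite !big_split /= sumrN mulr_sumr.
rewrite (sum_two (fun i => (xlnx (mu e i) + xlnx (mu (-e) i) - 2 * xlnx (mustar i)))) in E.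
  rewrite /entropy /mu dva dvb !mulr1 !mulrN1 opprK in E *.
  rewrite -/(mu e) -/(mu (-e)).
  lra.
move=> i ia ib; rewrite /mu dvo // !mulr0 !addr0; ring.
Qed.
End S.

Lemma sfun_ge (R : realType) (p x : R) : p <= x -> sfun p x = p.
Proof. by rewrite /sfun => ->. Qed.
Lemma sfun_lt (R : realType) (p x : R) : x < p -> sfun p x = 0.
Proof. by rewrite /sfun ltNge => /negbTE ->. Qed.
Arguments sfun_ge {R p x}. Arguments sfun_lt {R p x}.

Theorem proposition2 (R : realType) (K : nat) (w : 'I_K -> R)
  (hwpos : forall i, 0 < w i)
  (hwinc : forall i j : 'I_K, (i < j)%N -> w i < w j)
  (pstar : ('I_K -> R) -> R)
  (hpstar : forall mu, is_market mu -> optimal_price w mu (pstar mu))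
  (mustar : 'I_K -> R) (r s : 'I_K) (hrs : (r < s)%N)
  (hr : in_M w r mustar) (hs : in_M w s mustar)
  (k : R) (hk : 0 <= k) :
  exists (n : nat) (tw : 'I_n -> R) (tm : 'I_n -> 'I_K -> R),
    is_segmentation mustar tw tm /\
    net_payoff w pstar k mustar tw tm >
      net_payoff w pstar k mustar (fun _ : 'I_1 => 1) (fun _ : 'I_1 => mustar).
Proof.
have mono : forall i j : 'I_K, (i <= j)%N -> w i <= w j.
  move=> i j; rewrite leq_eqVlt => /orP[/eqP E|/hwinc/ltW //].
  by rewrite (val_inj E).
have [[mu0 mu1] hropt] := hr.
have hsopt := hs.2.
set Vr := revenue w (w r) mustar.
set Vs := revenue w (w s) mustar.
have VrVs : Vr <= Vs by apply: hsopt.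
have VsVr : Vs <= Vr by apply: hropt.
pose i0 : 'I_K := Ordinal (leq_ltn_trans (leq0n r) (ltn_ord r)).
have Vspos : 0 < Vs.
  apply: (lt_le_trans _ (hsopt (w i0))).
  rewrite /revenue (eq_bigr (fun i => w i0 * mustar i)); last first.
    by move=> i _; rewrite sfun_ge // mono.
  by rewrite -mulr_sumr mu1 mulr1.
have [b /andP[sb mb]|nob] := pickP (fun i : 'I_K => (s <= i)%N && (0 < mustar i)); last first.
  exfalso; move: Vspos; rewrite /Vs /revenue big1; first by rewrite ltxx.
  move=> i _; case: (leqP s i) => si.
    have /= := nob i; rewrite si /= => /negbT; rewrite -leNgt => hle.
    by rewrite (_ : mustar i = 0) ?mulr0 //; apply/eqP; rewrite eq_le hle mu0.
  by rewrite sfun_lt ?mul0r // hwinc.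
have [a /and3P[ra as_ ma]|noa] :=
  pickP (fun i : 'I_K => [&& (r <= i)%N, (i < s)%N & (0 < mustar i)]); last first.
  exfalso.
  have : 0 < Vs - Vr.
    rewrite /Vs /Vr /revenue -sumrB (bigD1 b) //=.
    apply: ltr_wpDr.
      apply: sumr_ge0 => i _.
      rewrite -mulrBl; case: (leqP s i) => si.
        rewrite (sfun_ge (mono _ _ si)) (sfun_ge (mono _ _ (leq_trans (ltnW hrs) si))).
        apply: mulr_ge0 => //; rewrite subr_ge0 ltW // hwinc //.
      case: (leqP r i) => ri.
        have /= := noa i; rewrite ri si /= => /negbT; rewrite -leNgt => hle.
        by rewrite (_ : mustar i = 0) ?mulr0 //; apply/eqP; rewrite eq_le hle mu0.
      by rewrite !sfun_lt ?hwinc // ?subr0 ?mul0r // (ltn_trans ri hrs).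
    rewrite -mulrBl !sfun_ge ?mono //; last exact: leq_trans (ltnW hrs) sb.
    by apply: mulr_gt0 => //; rewrite subr_gt0 hwinc.
  lra.
have hab : (a < b)%N by apply: leq_trans as_ sb.
have ab : a != b by apply/eqP => E; move: hab; rewrite E ltnn.
set xa := mustar a; set xb := mustar b.
set C := xa^-1 + xb^-1.
have Cpos : 0 < C by apply: addr_gt0; rewrite invr_gt0.
have wspos := hwpos s.
pose eps := Num.min (Num.min (xa/2) (xb/2)) (w s / (4 * (k * C + 1))).
have kC0 : 0 < 4 * (k * C + 1) by apply: mulr_gt0 => //; apply: ltr_wpDl => //; apply: mulr_ge0 => //; apply: ltW.
have epspos : 0 < eps.
  by rewrite !lt_min !divr_gt0.
have epsa : eps <= xa / 2 by rewrite /eps !ge_min lexx.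
have epsb : eps <= xb / 2 by rewrite /eps !ge_min lexx orbT.
have epsw : eps * (4 * (k * C + 1)) <= w s.
  by rewrite -ler_pdivlMr // /eps ge_min lexx orbT.
have kCe : 4 * (k * C * eps) < w s.
  have : 0 <= k * C by apply: mulr_ge0 => //; apply: ltW.
  nra.
pose m1 := mu R K a b mustar eps.
pose m2 := mu R K a b mustar (- eps).
have mk1 : is_market m1 by apply: market_mu => //; rewrite -/xa -/xb; lra.
have mk2 : is_market m2 by apply: market_mu => //; rewrite -/xa -/xb; lra.
exists 2%N, (fun _ => 1/2), (fun j : 'I_2 => if j == ord0 then m1 else m2).
split.
  split.
  - by move=> j; lra.
  - rewrite !big_ord_recl big_ord0 /=; lra.
  - by move=> j; case: (j == ord0).
  - move=> i; rewrite !big_ord_recl big_ord0 /= /m1 /m2 /mu; lra.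
rewrite /net_payoff /seg_cost !big_ord_recl !big_ord0 /=.
rewrite !addr0 (mul1r (revenue _ _ _)) (mul1r (entropy _)) subrr mulr0 subr0 /m1 /m2 ent_mu //.
have P0 := hropt (pstar mustar).
have P1 := hpstar _ mk1 (w r).
have P2 := hpstar _ mk2 (w s).
rewrite /m1 /m2 [in X in X <= _]rev_mu // in P1. rewrite [in X in X <= _]rev_mu // in P2.
rewrite (sfun_ge (mono _ _ ra)) (sfun_ge (mono _ _ (leq_trans (ltnW hrs) sb))) in P1.
rewrite (sfun_lt (hwinc _ _ as_)) (sfun_ge (mono _ _ sb)) in P2.
have xapos : 0 < xa by [].
have xbpos : 0 < xb by [].
have Ta := @key R xa eps epspos.
have Tb := @key R xb eps epspos.
rewrite /m1 /m2 in P1 P2.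
rewrite -/xa -/xb.
set T := (X in k * (1 / 2 * X)).
have hT : 1 / 2 * T <= eps * eps * C.
  rewrite /T /C.
  have ea : eps < xa by lra.
  have eb : eps < xb by lra.
  have := Ta ea; have := Tb eb.
  rewrite mulrDr; lra.
have hkT : k * (1 / 2 * T) <= k * (eps * eps * C) by rewrite ler_wpM2l.
have h4 : 4 * (k * (eps * eps * C)) < eps * w s.
  have -> : 4 * (k * (eps * eps * C)) = eps * (4 * (k * C * eps)) by ring.
  by rewrite ltr_pM2l.
rewrite /Vr /Vs in VrVs VsVr.
have ews : 0 < eps * w s by apply: mulr_gt0.
lra.
Qed.
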